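(* Let $(G,\gamma,b)$ be an RES-graph and let $f_0$ and $f_1$ be arcs of $G$ with the same head. Then no basis of the flooding matroid $M(G,\gamma,b)$ contains both $(f_0,0)$ and $(f_1,1)$.
   Context: Graphs are finite and may have loops and multiple edges. Each edge consists of two half-edges; each half-edge is incident to a vertex, and a loop contributes $2$ to the degree of its vertex. An arc is an ordered pair $(h_1,h_2)$ of half-edges forming an edge; its tail is the vertex of $h_1$ and its head is the vertex of $h_2$. A trail is a sequence of arcs whose edges are pairwise distinct and such that the head of each arc (other than the last) is the tail of the next. Its tail and head are the tail of its first arc and the head of its last arc. A circuit is a trail whose head equals its tail. A circuit-decomposition is a collection of circuits using every edge exactly once. A graph is Eulerian if it is connected and every vertex has even degree. A signature is a function $\gamma:E(G)\to\mathbb{Z}_2$. The weight of a trail is the $\mathbb{Z}_2$-sum of $\gamma$ over its edges, and a trail is zero or non-zero accordingly. An RES-graph is a triple $(G,\gamma,b)$ where $G$ is Eulerian, $\gamma$ is a signature of $G$, and $b\in V(G)$. A flooding is a circuit-decomposition of $G$ of size $\deg(b)/2$ in which every circuit has $b$ as its tail and head. A flooding is optimal if it has the maximum number of non-zero circuits among all floodings of $(G,\gamma,b)$. For a zero circuit $C$ with tail and head $b$, a representative of $C$ is a pair $(f,\alpha)$ where $f$ is an arc of $C$ and $\alpha\in\{0,1\}$ is the weight of the initial subtrail of $C$ ending with $f$ (i.e., $C$ with all arcs after $f$ deleted). A system of representatives for a flooding $\mathcal{C}$ is a set consisting of exactly one representative for each zero circuit of $\mathcal{C}$. The flooding matroid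 $M(G,\gamma,b)$ has as ground set all pairs $(f,\alpha)$ with $f$ an arc of $G$ and $\alpha\in\{0,1\}$. Its bases are the systems of representatives of optimal floodings; if an optimal flooding has no zero circuits, then the empty set is a basis. *)

(* Defs.v *)
From mathcomp Require Import all_boot.
Set Implicit Arguments. Unset Strict Implicit. Unset Printing Implicit Defensive.

(* A finite graph (loops and multiple edges allowed) is given by finite types
   of vertices V and edges E, where each edge e has two half-edges (e,false)
   and (e,true); inc maps each half-edge to its incident vertex. *)

Section RES.
Variables (V E : finType) (inc : E * bool -> V).

Definition halfedge := (E * bool)%type.

(* The arc (e,d) is the ordered pair of half-edges ((e,d),(e,~~d)). *)
Definition garc := (E * bool)%type.
Definition arc_edge (a : garc) : E := a.1.
Definition atail (a : garc) : V := inc a.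
Definition ahead (a : garc) : V := inc (a.1, ~~ a.2).

(* degree: number of half-edges at v (a loop contributes 2) *)
Definition deg (v : V) : nat := #|[set h : halfedge | inc h == v]|.

Definition adj : rel V := fun u v =>
  [exists e : E, ((inc (e, false) == u) && (inc (e, true) == v))
              || ((inc (e, true) == u) && (inc (e, false) == v))].

Definition connected_graph : Prop := forall u v : V, connect adj u v.

Definition eulerian : Prop := connected_graph /\ forall v : V, ~~ odd (deg v).

Definition is_trail (s : seq garc) : bool :=
  match s with
  | [::] => false
  | a :: s' => uniq (map arc_edge s) && path (fun x y => ahead x == atail y) a s'
  end.

Definition trail_tail (a0 : garc) (s : seq garc) : V := atail (head a0 s).
Definition trail_head (a0 : garc) (s : seq garc) : V := ahead (last a0 s).

Definition circuit_at (b : V) (s : seq garc) : bool :=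
  match s with
  | [::] => false
  | a :: _ => [&& is_trail s, trail_tail a s == b & trail_head a s == b]
  end.

Variable gamma : E -> bool. (* signature into Z_2 = bool with addb *)

Definition weight (s : seq garc) : bool :=
  foldr (fun a acc => gamma (arc_edge a) (+) acc) false s.

Definition flooding (b : V) (F : seq (seq garc)) : Prop :=
  [/\ all (circuit_at b) F, size F = (deg b) %/ 2
    & perm_eq (flatten (map (map arc_edge) F)) (enum E)].

Definition num_nonzero (F : seq (seq garc)) : nat := count weight F.

Definition optimal_flooding (b : V) (F : seq (seq garc)) : Prop :=
  flooding b F /\
  forall F' : seq (seq garc), flooding b F' -> num_nonzero F' <= num_nonzero F.

Definition representative (C : seq garc) (p : garc * bool) : bool :=
  (p.1 \in C) && (weight (take (index p.1 C).+1 C) == p.2).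

Definition system_of_representatives (F : seq (seq garc)) (S : {set garc * bool}) : Prop :=
  exists r : 'I_(size F) -> garc * bool,
    (forall i : 'I_(size F), ~~ weight (nth [::] F i) ->
        representative (nth [::] F i) (r i)) /\
    S = [set r i | i : 'I_(size F) & ~~ weight (nth [::] F i)].

Definition flooding_matroid_basis (b : V) (S : {set garc * bool}) : Prop :=
  exists F : seq (seq garc), optimal_flooding b F /\ system_of_representatives F S.

End RES.

(* Main.v *)
Require Import Defs.
From mathcomp Require Import all_boot.
From mathcomp Require Import zify.
Set Implicit Arguments. Unset Strict Implicit. Unset Printing Implicit Defensive.

Lemma last_take_nth (T : Type) (x0 a : T) s n :
  n <= size s -> last a (take n s) = nth x0 (a :: s) n.
Proof.
elim: s a n => [|y s IH] a [|n] //= H.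
by rewrite IH.
Qed.

Lemma perm_rem_nth (T : eqType) (x0 : T) (s : seq T) i :
  i < size s -> perm_eq s (nth x0 s i :: (take i s ++ drop i.+1 s)).
Proof.
move=> hi; rewrite -{1}(cat_take_drop i s) (drop_nth x0 hi).
by apply/permP => p; rewrite /= !count_cat /=; lia.
Qed.

Lemma split2 (T : eqType) (x0 : T) (s : seq T) i j :
  i < size s -> j < size s -> i != j ->
  exists R, perm_eq s (nth x0 s i :: nth x0 s j :: R).
Proof.
move=> hi hj hij.
set t := take i s ++ drop i.+1 s.
have st : size t = (size s).-1.
  rewrite /t size_cat size_take size_drop hi; lia.
set j' := if j < i then j else j.-1.
have hj' : j' < size t by rewrite st /j'; case: ifP => hji; lia.
have nj : nth x0 t j' = nth x0 s j.
  rewrite /t /j'; case: ifP => hji; rewrite nth_cat size_take hi.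
    by rewrite hji nth_take.
  have -> : (j.-1 < i) = false by lia.
  rewrite nth_drop; congr nth; lia.
exists (take j' t ++ drop j'.+1 t).
apply: perm_trans; first exact: (perm_rem_nth x0 hi).
by rewrite perm_cons -nj; apply: perm_rem_nth.
Qed.

Section Proof.
Variables (V E : finType) (inc : E * bool -> V) (gamma : E -> bool) (b : V).

Lemma weight_cat s1 s2 : weight gamma (s1 ++ s2) = weight gamma s1 (+) weight gamma s2.
Proof. by elim: s1 => //= a s IH; rewrite IH addbA. Qed.

Lemma flooding_perm F F' : flooding inc b F -> perm_eq F F' -> flooding inc b F'.
Proof.
move=> [h1 h2 h3] hp; split.
- by rewrite -(perm_all _ hp).
- by rewrite -(perm_size hp).
- apply: perm_trans; last exact: h3. apply: perm_flatten; apply: perm_map; by rewrite perm_sym.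
Qed.

Let r := fun x y : garc E => ahead inc x == atail inc y.

Lemma path_head_eq x x' q : ahead inc x = ahead inc x' -> path r x q = path r x' q.
Proof. by case: q => //= y q; rewrite /r => ->. Qed.

Lemma last_head_eq x x' q : ahead inc x = ahead inc x' -> ahead inc (last x q) = ahead inc (last x' q).
Proof. by case: q. Qed.

Lemma circ_splice C0 C1 f0 f1 :
  circuit_at inc b C0 -> circuit_at inc b C1 -> f0 \in C0 -> f1 \in C1 ->
  ahead inc f0 = ahead inc f1 ->
  uniq (map (@arc_edge E) (take (index f0 C0).+1 C0 ++ drop (index f1 C1).+1 C1)) ->
  circuit_at inc b (take (index f0 C0).+1 C0 ++ drop (index f1 C1).+1 C1).
Proof.
case: C0 => [|a0 s0] //; case: C1 => [|a1 s1] //.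
move=> c0 c1 m0 m1 hh.
have n0s := m0; rewrite -index_mem in n0s.
have n1s := m1; rewrite -index_mem in n1s.
have e0 := nth_index f0 m0; have e1 := nth_index f1 m1.
move: (index f0 _) (index f1 _) n0s n1s e0 e1 => n0 n1 n0s n1s e0 e1 /= hu.
rewrite /= in n0s n1s.
move: c0 c1 => /= /and3P [/andP [_ p0] t0 h0] /and3P [/andP [_ p1] t1 h1].
rewrite /trail_tail /trail_head /= in t0 h0 t1 h1 *.
rewrite hu t0 /=.
rewrite -(cat_take_drop n0 s0) cat_path in p0.
rewrite -(cat_take_drop n1 s1) cat_path in p1.
rewrite -(cat_take_drop n1 s1) last_cat in h1.
case/andP: p0 => p0 _; case/andP: p1 => _ p1.
rewrite (last_take_nth f1) in p1 h1; last by rewrite -ltnS.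
rewrite e1 in p1 h1.
rewrite cat_path last_cat p0 /= (last_take_nth f0); last by rewrite -ltnS.
rewrite e0 (path_head_eq _ hh) p1 /=.
by rewrite (last_head_eq _ hh).
Qed.

Lemma key C0 C1 R f0 f1 :
  flooding inc b (C0 :: C1 :: R) ->
  representative gamma C0 (f0, false) -> representative gamma C1 (f1, true) ->
  ~~ weight gamma C0 -> ~~ weight gamma C1 -> ahead inc f0 = ahead inc f1 ->
  flooding inc b ((take (index f0 C0).+1 C0 ++ drop (index f1 C1).+1 C1)
      :: (take (index f1 C1).+1 C1 ++ drop (index f0 C0).+1 C0) :: R)
  /\ num_nonzero gamma ((take (index f0 C0).+1 C0 ++ drop (index f1 C1).+1 C1)
      :: (take (index f1 C1).+1 C1 ++ drop (index f0 C0).+1 C0) :: R)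
     = (num_nonzero gamma (C0 :: C1 :: R)).+2.
Proof.
move=> [hall hsz hperm] /andP [m0 /eqP w0] /andP [m1 /eqP w1] z0 z1 hh.
set P0 := take _ C0; set Q0 := drop _ C0; set P1 := take _ C1; set Q1 := drop _ C1.
have wQ0 : weight gamma Q0 = false.
  move: z0; rewrite -(cat_take_drop (index f0 C0).+1 C0) weight_cat -/P0 -/Q0 w0.
  by case: (weight gamma Q0).
have wQ1 : weight gamma Q1 = true.
  move: z1; rewrite -(cat_take_drop (index f1 C1).+1 C1) weight_cat -/P1 -/Q1 w1.
  by case: (weight gamma Q1).
have hp : perm_eq (flatten (map (map (@arc_edge E)) ((P0 ++ Q1) :: (P1 ++ Q0) :: R)))
                  (flatten (map (map (@arc_edge E)) (C0 :: C1 :: R))).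
  rewrite /= -(cat_take_drop (index f0 C0).+1 C0) -(cat_take_drop (index f1 C1).+1 C1).
  rewrite -/P0 -/Q0 -/P1 -/Q1 !map_cat.
  apply/permP => p; rewrite !count_cat; lia.
have hu : uniq (flatten (map (map (@arc_edge E)) ((P0 ++ Q1) :: (P1 ++ Q0) :: R))).
  by rewrite (perm_uniq hp) (perm_uniq hperm) enum_uniq.
move: hall => /= /and3P [c0 c1 cR].
move: hu => /=; rewrite cat_uniq => /and3P [u0 _]; rewrite cat_uniq => /andP [u1 _].
split; last by rewrite /num_nonzero /= !weight_cat w0 w1 wQ0 wQ1 (negbTE z0) (negbTE z1).
split => //=.
- rewrite cR andbT; apply/andP; split.
  + exact: circ_splice.
  + by apply: circ_splice => //.
- by apply: perm_trans; first exact: hp.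
Qed.

End Proof.

Theorem mainTheorem4 (V E : finType) (inc : E * bool -> V) (gamma : E -> bool)
  (b : V) (f0 f1 : garc E) :
  eulerian inc ->
  ahead inc f0 = ahead inc f1 ->
  forall B : {set garc E * bool},
    flooding_matroid_basis inc gamma b B ->
    ~ ((f0, false) \in B /\ (f1, true) \in B).
Proof.
move=> _ hh B [F [[hfl hopt] [r [hr ->]]]] [/imsetP [i hi e0] /imsetP [j hj e1]].
rewrite inE in hi; rewrite inE in hj.
have ri := hr i hi; have rj := hr j hj.
rewrite -e0 in ri; rewrite -e1 in rj.
have hij : (i : nat) != j.
  apply/negP => /eqP /val_inj eij; move: e1; rewrite -eij -e0; by case.
have [R hR] := split2 [::] (ltn_ord i) (ltn_ord j) hij.
have hfl' := flooding_perm hfl hR.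
have [hF' hc] := key hfl' ri rj hi hj hh.
have := hopt _ hF'.
rewrite hc /num_nonzero (permP hR) => h.
by have := ltn_trans (ltnSn _) h; rewrite ltnn.
Qed.
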